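(* Let $V\subseteq\mathcal V$ be finite and let $\mathcal E,\mathcal F\in \mathit{DProg}(V)$. Then: (1) $\mathcal E\le_T^e\mathcal F$ if and only if $\mathcal E\sqsubseteq\mathcal F$; (2) $\mathcal E\le_P^e\mathcal F$ if and only if $\mathcal F\sqsubseteq\mathcal E$; (3) $\mathcal E\equiv_T^e\mathcal F$ iff $\mathcal E\equiv_P^e\mathcal F$ iff $\mathcal E=\mathcal F$; (4) if both $\mathcal E$ and $\mathcal F$ are trace-preserving, then $\mathcal E\le_T^e\mathcal F$ iff $\mathcal E\le_P^e\mathcal F$ iff $\mathcal E=\mathcal F$.
   Context: $\mathcal V$ is a countably infinite set of quantum variables, each $q\in\mathcal V$ with state space $\mathcal H_q=\mathbb C^2$; for finite $V\subseteq\mathcal V$, $\mathcal H_V=\bigotimes_{q\in V}\mathcal H_q$ with identity $I_V$. $\mathcal D(\mathcal H)$ denotes partial density operators (positive operators of trace $\le 1$), $\mathcal P(\mathcal H)$ effects (positive operators with eigenvalues in $[0,1]$), and $\sqsubseteq$ the Löwner order on operators ($A\sqsubseteq B$ iff $B-A$ is positive). $\mathit{DProg}(V)$ is the set of completely positive trace-nonincreasing (CPTN) super-operators on $\mathcal L(\mathcal H_V)$; for $\mathcal E,\mathcal F\in\mathit{DProg}(V)$, $\mathcal E\sqsubseteq\mathcal F$ means that $\mathcal F-\mathcal E$ is completely positive. Convention: operators and super-operators on a subsystem are implicitly extended to a larger system by tensoring with the identity operator / identity super-operator. Correctness: for finite $W\subseteq\mathcal V$ and $M,N\in\mathcal P(\mathcal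 H_W)$, $\mathcal E\models_{tot}(M,N)$ means that for every finite $X\supseteq V\cup W$ and every $\rho\in\mathcal D(\mathcal H_X)$, ${\rm tr}(M\rho)\le{\rm tr}(N\mathcal E(\rho))$; $\mathcal E\models_{par}(M,N)$ means that for all such $X,\rho$, ${\rm tr}(M\rho)\le{\rm tr}(N\mathcal E(\rho))+{\rm tr}(\rho)-{\rm tr}(\mathcal E(\rho))$. Refinement: $\mathcal E\le_T^e\mathcal F$ iff for every finite $W\subseteq\mathcal V$ and all $M,N\in\mathcal P(\mathcal H_W)$, $\mathcal E\models_{tot}(M,N)$ implies $\mathcal F\models_{tot}(M,N)$; $\mathcal E\le_P^e\mathcal F$ is defined the same way with $\models_{par}$. $\mathcal E\equiv_T^e\mathcal F$ means $\mathcal E\le_T^e\mathcal F$ and $\mathcal F\le_T^e\mathcal E$; similarly $\equiv_P^e$. *)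

(* Defs.v *)
(* complex numbers R[i] over an abstract real field R : realType,
   quantum variables = natural numbers, finite sets of variables = {fset nat}. *)
From HB Require Import structures.
From mathcomp Require Import all_boot all_order all_algebra.
From mathcomp Require Import finmap.
From mathcomp Require Import complex.
From mathcomp Require Import reals.

Set Implicit Arguments.
Unset Strict Implicit.
Unset Printing Implicit Defensive.

Import Order.TTheory GRing.Theory Num.Theory.
Local Open Scope ring_scope.

(* Computational basis of H_X = (C^2)^{(x) X}: assignments X -> bool. *)
Definition basis (X : {fset nat}) : finType := {ffun X -> bool}.

Section Quantum.
Variable R : realType.
Local Notation C := (R[i]).

(* Linear operators on H_X, as matrices indexed by the computational basis. *)
Definition Op (X : {fset nat}) := basis X -> basis X -> C.

Definition SO (V : {fset nat}) := Op V -> Op V.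

Definition op_tr X (A : Op X) : C := \sum_(a : basis X) A a a.
Definition op_mul X (A B : Op X) : Op X := fun a b => \sum_(c : basis X) A a c * B c b.
Definition op_sub X (A B : Op X) : Op X := fun a b => A a b - B a b.
Definition op_id X : Op X := fun a b => (a == b)%:R.

Definition positive X (A : Op X) : Prop :=
  forall v : basis X -> C,
    0 <= \sum_(a : basis X) \sum_(b : basis X) (v a)^* * A a b * v b.

Definition loewner X (A B : Op X) : Prop := positive (op_sub B A).

Definition pdensity X (rho : Op X) : Prop := positive rho /\ op_tr rho <= 1.

Definition effect X (M : Op X) : Prop := positive M /\ loewner M (@op_id X).

(* Restriction of a basis state of X to W (meaningful for W `<=` X). *)
Definition restr (X W : {fset nat}) (a : basis X) : basis W :=
  [ffun w : W => match insub (val w) : option X with Some x => a x | None => false end].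

Definition merge (X V : {fset nat}) (u : basis V) (a : basis X) : basis X :=
  [ffun x : X => match insub (val x) : option V with Some v => u v | None => a x end].

(* Cylindrical extension M (x) I_{X \ W} of an operator M on H_W to H_X. *)
Definition ext_op (W X : {fset nat}) (M : Op W) : Op X :=
  fun a b => if [forall x : X, (val x \notin W) ==> (a x == b x)]
             then M (@restr X W a) (@restr X W b) else 0.

(* Extension E (x) id_{X \ V} of a super-operator on L(H_V) to L(H_X). *)
Definition ext_so (V X : {fset nat}) (E : SO V) (rho : Op X) : Op X :=
  fun a b => E (fun u v => rho (merge u a) (merge v b)) (@restr X V a) (@restr X V b).

Definition so_linear V (E : SO V) : Prop :=
  forall (k : C) (A B : Op V),
    E (fun a b => k * A a b + B a b) = (fun a b => k * E A a b + E B a b).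

(* Complete positivity (ancillas are extra qubits, per the convention that
   super-operators are extended by tensoring with the identity). *)
Definition completely_positive V (E : SO V) : Prop :=
  forall X : {fset nat}, (V `<=` X)%fset ->
    forall rho : Op X, positive rho -> positive (@ext_so V X E rho).

Definition trace_nonincreasing V (E : SO V) : Prop :=
  forall rho : Op V, positive rho -> op_tr (E rho) <= op_tr rho.

Definition trace_preserving V (E : SO V) : Prop :=
  forall rho : Op V, op_tr (E rho) = op_tr rho.

Definition DProg V (E : SO V) : Prop :=
  [/\ so_linear E, completely_positive E & trace_nonincreasing E].

Definition so_le V (E F : SO V) : Prop :=
  forall X : {fset nat}, (V `<=` X)%fset ->
    forall rho : Op X, positive rho ->
      positive (op_sub (@ext_so V X F rho) (@ext_so V X E rho)).

Definition models_tot V (E : SO V) (W : {fset nat}) (M N : Op W) : Prop :=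
  forall X : {fset nat}, (V `|` W `<=` X)%fset ->
    forall rho : Op X, pdensity rho ->
      op_tr (op_mul (@ext_op W X M) rho) <= op_tr (op_mul (@ext_op W X N) (@ext_so V X E rho)).

Definition models_par V (E : SO V) (W : {fset nat}) (M N : Op W) : Prop :=
  forall X : {fset nat}, (V `|` W `<=` X)%fset ->
    forall rho : Op X, pdensity rho ->
      op_tr (op_mul (@ext_op W X M) rho) <=
      op_tr (op_mul (@ext_op W X N) (@ext_so V X E rho)) + op_tr rho - op_tr (@ext_so V X E rho).

Definition refine_tot V (E F : SO V) : Prop :=
  forall (W : {fset nat}) (M N : Op W), effect M -> effect N ->
    models_tot E M N -> models_tot F M N.

Definition refine_par V (E F : SO V) : Prop :=
  forall (W : {fset nat}) (M N : Op W), effect M -> effect N ->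
    models_par E M N -> models_par F M N.

Definition equiv_tot V (E F : SO V) : Prop := refine_tot E F /\ refine_tot F E.
Definition equiv_par V (E F : SO V) : Prop := refine_par E F /\ refine_par F E.

End Quantum.

Arguments op_id {R} X _ _.
Arguments restr {X} W a.
Arguments ext_op {R W} X M _ _.
Arguments ext_so {R V} X E rho _ _.

(* Main.v *)
Require Import Defs.
From HB Require Import structures.
From mathcomp Require Import all_boot all_order all_algebra.
From mathcomp Require Import finmap complex reals.
From mathcomp Require Import ring sesquilinear spectral.
From Stdlib Require Import FunctionalExtensionality.
Require Import Defs.
Set Implicit Arguments.
Unset Strict Implicit.
Unset Printing Implicit Defensive.
Import Order.TTheory GRing.Theory Num.Theory.
Local Open Scope ring_scope.

Section LA.
Variable C : numClosedFieldType.

Section MX.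
Local Open Scope sesquilinear_scope.
Lemma mx_decomp n (M : 'M[C]_n) : M \is hermsymmx ->
  (forall v : 'I_n -> C, 0 <= \sum_i \sum_j (v i)^* * M i j * v j) ->
  exists d : 'I_n -> C, exists w : 'I_n -> 'I_n -> C,
    (forall k, 0 <= d k) /\ forall i j, M i j = \sum_k d k * w k i * (w k j)^*.
Proof.
move=> hM pM.
have PU : spectralmx M \is unitarymx := spectral_unitarymx M.
have /orthomx_spectralP eM := hermitian_normalmx hM.
rewrite invmx_unitary // in eM.
move: (spectralmx M) (spectral_diag M) PU eM => P s PU eM.
exists (fun k => s 0 k), (fun k i => (P k i)^*); split; last first.
  move=> i j; rewrite eM mul_mx_diag !mxE; apply: eq_bigr => k _.
  by rewrite !mxE conjCK [_ * s 0 k]mulrC.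
move=> k.
have eD : diag_mx s = P *m M *m P^t*.
  rewrite eM !mulmxA (unitarymxP PU) mul1mx -mulmxA (unitarymxP PU) mulmx1 //.
have := pM (fun i => (P k i)^*).
have -> : s 0 k = diag_mx s k k by rewrite mxE eqxx mulr1n.
rewrite eD mxE.
under [X in _ -> _ <= X]eq_bigr => j _ do rewrite !mxE big_distrl /=.
rewrite exchange_big /=.
congr (_ <= _); apply: eq_bigr => i _; apply: eq_bigr => j _.
by rewrite conjCK.
Qed.
End MX.

Section T.
Variable T : finType.
Implicit Types A B : T -> T -> C.

Definition qf A (v : T -> C) := \sum_(a : T) \sum_(b : T) (v a)^* * A a b * v b.
Definition psd A := forall v, 0 <= qf A v.
Definition trc A := \sum_(a : T) A a a.
Definition mulo A B : T -> T -> C := fun a b => \sum_(c : T) A a c * B c b.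

Lemma sum_delta (f : T -> C) a : \sum_(q : T) f q * (q == a)%:R = f a.
Proof.
rewrite (bigD1 a) //= eqxx mulr1 big1 ?addr0 // => q /negbTE ->; by rewrite mulr0.
Qed.

Lemma sum_deltal (f : T -> C) a : \sum_(q : T) (q == a)%:R * f q = f a.
Proof. by rewrite -[RHS](sum_delta f a); apply: eq_bigr => q _; rewrite mulrC. Qed.

Lemma qfE A v : qf A v = \sum_a (v a)^* * \sum_b A a b * v b.
Proof. apply: eq_bigr => a _; rewrite mulr_sumr; apply: eq_bigr => b _; by rewrite mulrA. Qed.

Lemma qf2 A a b (x y : C) :
  qf A (fun p => x * (p == a)%:R + y * (p == b)%:R) =
  x^* * x * A a a + x^* * y * A a b + y^* * x * A b a + y^* * y * A b b.
Proof.
rewrite qfE.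
have inner p : \sum_q A p q * (x * (q == a)%:R + y * (q == b)%:R) = x * A p a + y * A p b.
  rewrite (eq_bigr (fun q => x * (A p q * (q == a)%:R) + y * (A p q * (q == b)%:R))).
    by rewrite big_split /= -!mulr_sumr !sum_delta.
  by move=> q _; ring.
under eq_bigr => p _ do rewrite inner.
rewrite (eq_bigr (fun p => x^* * ((p == a)%:R * (x * A p a + y * A p b)) + y^* * ((p == b)%:R * (x * A p a + y * A p b)))).
  by rewrite big_split /= -!mulr_sumr !sum_deltal; ring.
by move=> p _; rewrite rmorphD !rmorphM /= !conjC_nat; ring.
Qed.

Lemma psd_diag A a : psd A -> 0 <= A a a.
Proof.
move=> /(_ (fun p => 1 * (p == a)%:R + 0 * (p == a)%:R)); rewrite qf2.
by rewrite conjC1 conjC0 !(mul0r, mulr0, add0r, addr0, mul1r).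
Qed.

Lemma psd_herm A a b : psd A -> A b a = (A a b)^*.
Proof.
move=> pA.
have Ha := geC0_conj (psd_diag a pA).
have Hb := geC0_conj (psd_diag b pA).
have /geC0_conj E1 := pA (fun p => 1 * (p == a)%:R + 1 * (p == b)%:R).
have /geC0_conj E2 := pA (fun p => 1 * (p == a)%:R + 'i * (p == b)%:R).
rewrite qf2 conjC1 !mul1r !rmorphD /= Ha Hb in E1.
rewrite qf2 !rmorphD !rmorphM /= !conjCi !conjC1 Ha Hb !mul1r !mulr1 in E2.
rewrite raddfN /= conjCi opprK in E2.
have ii : 'i * 'i + 1 = 0 :> C by rewrite -expr2 sqrCi addNr.
have H2 : 2 * ((A a b)^* - A b a) = 0.
  have -> : 2 * ((A a b)^* - A b a) =
     ((A a a + (A a b)^* + (A b a)^* + A b b) - (A a a + A a b + A b a + A b b))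
   + 'i * ((A a a + - 'i * (A a b)^* + 'i * (A b a)^* + 'i * - 'i * A b b) -
           (A a a + 'i * A a b + - 'i * A b a + - 'i * 'i * A b b))
   + ('i * 'i + 1) * (A a b - A b a + (A a b)^* - (A b a)^*) by ring.
  by rewrite E1 E2 ii !subrr mulr0 mul0r !addr0.
by move/eqP: H2; rewrite mulf_eq0 pnatr_eq0 /= subr_eq0 => /eqP ->.
Qed.


Lemma sum_rank (F : T -> C) : \sum_(i : 'I_#|T|) F (enum_val i) = \sum_a F a.
Proof.
rewrite (reindex (@enum_rank T)) /=; last first.
  by apply: onW_bij; exact: enum_rank_bij.
by apply: eq_bigr => a _; rewrite enum_rankK.
Qed.

Lemma psd_decomp A : psd A -> exists n, exists d : 'I_n -> C, exists w : 'I_n -> T -> C,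
  (forall k, 0 <= d k) /\ forall a b, A a b = \sum_k d k * w k a * (w k b)^*.
Proof.
move=> pA.
pose M : 'M[C]_#|T| := \matrix_(i, j) A (enum_val i) (enum_val j).
have hM : M \is hermsymmx.
  apply/is_hermitianmxP; apply/matrixP => i j; rewrite !mxE expr0 mul1r.
  exact: psd_herm.
have pM : forall v : 'I_#|T| -> C, 0 <= \sum_i \sum_j (v i)^* * M i j * v j.
  move=> v; have := pA (fun a => v (enum_rank a)); rewrite /qf.
  rewrite -sum_rank; under eq_bigr => i _ do rewrite -sum_rank.
  congr (_ <= _); apply: eq_bigr => i _; apply: eq_bigr => j _.
  by rewrite !mxE !enum_valK.
have [d [w [d0 eM]]] := mx_decomp hM pM.
exists #|T|, d, (fun k a => w k (enum_rank a)); split => // a b.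
by rewrite -eM mxE !enum_rankK.
Qed.

Lemma tr_decomp A B n (d : 'I_n -> C) (w : 'I_n -> T -> C) :
  (forall a b, A a b = \sum_k d k * w k a * (w k b)^*) ->
  trc (mulo A B) = \sum_k d k * qf B (w k).
Proof.
move=> eA; rewrite /trc /mulo.
under eq_bigr => a _ do under eq_bigr => c _ do rewrite eA big_distrl /=.
under eq_bigr => a _ do rewrite exchange_big /=.
rewrite exchange_big /=; apply: eq_bigr => k _.
rewrite /qf mulr_sumr exchange_big /=; apply: eq_bigr => c _.
rewrite mulr_sumr; apply: eq_bigr => a _; ring.
Qed.

Lemma tr_mul_ge0 A B : psd A -> psd B -> 0 <= trc (mulo A B).
Proof.
move=> /psd_decomp [n [d [w [d0 eA]]]] pB.
rewrite (tr_decomp B eA); apply: sumr_ge0 => k _; exact: mulr_ge0.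
Qed.

Lemma trc_ge0 A : psd A -> 0 <= trc A.
Proof. by move=> pA; apply: sumr_ge0 => a _; exact: psd_diag. Qed.

Lemma psd_tr0 A : psd A -> trc A = 0 -> forall a b, A a b = 0.
Proof.
move=> /psd_decomp [n [d [w [d0 eA]]]] t0 a b.
have t' : \sum_k \sum_a d k * (w k a * (w k a)^*) = 0.
  rewrite -[in RHS]t0 /trc exchange_big /=; apply: eq_bigr => c _.
  by rewrite eA; apply: eq_bigr => k _; rewrite mulrA.
have h1 : forall k, \sum_a d k * (w k a * (w k a)^*) = 0.
  move=> k; apply: (psumr_eq0P _ t') => // j _.
  by apply: sumr_ge0 => c _; apply: mulr_ge0 => //; exact: mul_conjC_ge0.
rewrite eA big1 // => k _.
have := @psumr_eq0P _ _ _ _ (fun c _ => mulr_ge0 (d0 k) (mul_conjC_ge0 (w k c))) (h1 k) a isT; move/eqP.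
rewrite mulf_eq0 mul_conjC_eq0 => /orP [/eqP -> | /eqP ->]; by rewrite !(mul0r, mulr0).
Qed.

Lemma rank1_psd (x : T -> C) : psd (fun p q => x p * (x q)^*).
Proof.
move=> v.
have -> : qf (fun p q => x p * (x q)^*) v =
   (\sum_a (v a)^* * x a) * (\sum_a (v a)^* * x a)^*.
  rewrite raddf_sum /= big_distrlr /=; apply: eq_bigr => a _; apply: eq_bigr => b _.
  by rewrite rmorphM /= conjCK; ring.
exact: mul_conjC_ge0.
Qed.

Lemma cs_psd (x : T -> C) : let s := \sum_a x a * (x a)^* in s != 0 ->
  psd (fun a b => (a == b)%:R - x a * (x b)^* / s).
Proof.
move=> s s0 v.
have sr : s^* = s by apply: geC0_conj; apply: sumr_ge0 => a _; exact: mul_conjC_ge0.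
have si : (s^-1)^* = s^-1.
  by apply: geC0_conj; rewrite invr_ge0; apply: sumr_ge0 => a _; exact: mul_conjC_ge0.
set z := \sum_a (v a)^* * x a.
have zc : z^* = \sum_a (x a)^* * v a.
  by rewrite rmorph_sum; apply: eq_bigr => a _; rewrite rmorphM /= conjCK mulrC.
set u := fun a => v a - (z^* / s) * x a.
have -> : qf (fun a b => (a == b)%:R - x a * (x b)^* / s) v = \sum_a (u a)^* * u a.
  have L : qf (fun a b => (a == b)%:R - x a * (x b)^* / s) v =
           \sum_a (v a)^* * v a - z * z^* / s.
    rewrite qfE zc big_distrl /= big_distrl /= -sumrB; apply: eq_bigr => a _.
    rewrite (eq_bigr (fun b => (b == a)%:R * v b - x a / s * ((x b)^* * v b))).
      by rewrite sumrB sum_deltal -mulr_sumr; ring.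
    by move=> b _; rewrite eq_sym; ring.
  have R : \sum_a (u a)^* * u a =
     \sum_a (v a)^* * v a - z^* / s * z - z / s * z^* + z / s * (z^* / s) * s.
    rewrite /u.
    rewrite (eq_bigr (fun a => ((v a)^* * v a - z^* / s * ((v a)^* * x a))
                  - z / s * ((x a)^* * v a) + z / s * (z^* / s) * (x a * (x a)^*))); last first.
      move=> a _; rewrite rmorphB rmorphM /= rmorphM /= conjCK si; ring.
    by rewrite big_split /= !sumrB -!mulr_sumr -zc.
  rewrite L R; field; exact: s0.
by apply: sumr_ge0 => a _; rewrite mulrC; exact: mul_conjC_ge0.
Qed.

Lemma sum_fiber (S : finType) (g : T -> S) (G : T -> S -> C) :
  \sum_(y : S) \sum_(a | g a == y) G a y = \sum_a G a (g a).
Proof.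
under eq_bigr => y _ do rewrite big_mkcond /=.
rewrite exchange_big /=; apply: eq_bigr => a _.
rewrite (bigD1 (g a)) //= eqxx big1 ?addr0 // => y /negbTE.
by rewrite eq_sym => ->.
Qed.

Lemma psd_ext A B : (forall a b, A a b = B a b) -> psd A -> psd B.
Proof.
move=> e pA v; have := pA v; congr (_ <= _).
by apply: eq_bigr => a _; apply: eq_bigr => b _; rewrite e.
Qed.

Lemma qf0 v : qf (fun _ _ => 0) v = 0.
Proof. by rewrite /qf big1 // => a _; rewrite big1 // => b _; rewrite mulr0 mul0r. Qed.

Lemma psd0 : psd (fun _ _ => 0).
Proof. by move=> v; rewrite qf0. Qed.

Lemma qfB A B v : qf (fun a b => A a b - B a b) v = qf A v - qf B v.
Proof.
rewrite /qf -sumrB; apply: eq_bigr => a _; rewrite -sumrB; apply: eq_bigr => b _; ring.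
Qed.

Lemma trcB A B : trc (fun a b => A a b - B a b) = trc A - trc B.
Proof. by rewrite /trc -sumrB. Qed.

Lemma muloBr A B B' : trc (mulo A (fun a b => B a b - B' a b)) = trc (mulo A B) - trc (mulo A B').
Proof.
rewrite /trc /mulo -sumrB; apply: eq_bigr => a _; rewrite -sumrB; apply: eq_bigr => b _; ring.
Qed.

Lemma muloBl A A' B : trc (mulo (fun a b => A a b - A' a b) B) = trc (mulo A B) - trc (mulo A' B).
Proof.
rewrite /trc /mulo -sumrB; apply: eq_bigr => a _; rewrite -sumrB; apply: eq_bigr => b _; ring.
Qed.

Lemma mulo1 B : trc (mulo (fun a b => (a == b)%:R) B) = trc B.
Proof.
rewrite /trc /mulo; apply: eq_bigr => a _.
by rewrite (eq_bigr (fun c => (c == a)%:R * B c a)) ?sum_deltal // => c _; rewrite eq_sym.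
Qed.

Lemma muloZr A B t : trc (mulo A (fun a b => t * B a b)) = t * trc (mulo A B).
Proof.
rewrite /trc /mulo mulr_sumr; apply: eq_bigr => a _; rewrite mulr_sumr; apply: eq_bigr => b _; ring.
Qed.

Lemma trcZ B t : trc (fun a b => t * B a b) = t * trc B.
Proof. by rewrite /trc mulr_sumr. Qed.

Lemma psdZ A t : 0 <= t -> psd A -> psd (fun a b => t * A a b).
Proof.
move=> t0 pA v; have -> : qf (fun a b => t * A a b) v = t * qf A v.
  rewrite /qf mulr_sumr; apply: eq_bigr => a _; rewrite mulr_sumr; apply: eq_bigr => b _; ring.
exact: mulr_ge0.
Qed.

Lemma qf_id v : qf (fun a b => (a == b)%:R) v = \sum_a (v a)^* * v a.
Proof.
rewrite qfE; apply: eq_bigr => a _; congr (_ * _).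
by rewrite (eq_bigr (fun b => (b == a)%:R * v b)) ?sum_deltal // => b _; rewrite eq_sym.
Qed.

Lemma qf_zero_vec A v : (forall a, v a = 0) -> qf A v = 0.
Proof. by move=> v0; rewrite /qf big1 // => a _; rewrite big1 // => b _; rewrite !v0 mulr0. Qed.

Lemma psd_of_tests D :
  (forall P, psd P -> psd (fun a b => (a == b)%:R - P a b) -> 0 <= trc (mulo P D)) -> psd D.
Proof.
move=> H v.
set s := \sum_a v a * (v a)^*.
have s0 : 0 <= s by apply: sumr_ge0 => a _; exact: mul_conjC_ge0.
have [/eqP sz | snz] := boolP (s == 0).
  rewrite qf_zero_vec // => a.
  have := @psumr_eq0P _ _ _ _ (fun a _ => mul_conjC_ge0 (v a)) sz a isT.
  by move/eqP; rewrite mul_conjC_eq0 => /eqP.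
have pP : psd (fun a b => (s^-1) * (v a * (v b)^*)).
  by apply: psdZ; [rewrite invr_ge0 | exact: rank1_psd].
have pIP : psd (fun a b => (a == b)%:R - (s^-1) * (v a * (v b)^*)).
  apply: psd_ext (cs_psd snz) => a b /=; congr (_ - _); rewrite -/s; ring.
have := H _ pP pIP.
have -> : trc (mulo (fun a b => s^-1 * (v a * (v b)^*)) D) = s^-1 * qf D v.
  rewrite /trc /mulo /qf mulr_sumr exchange_big /=; apply: eq_bigr => c _.
  rewrite mulr_sumr; apply: eq_bigr => a _; ring.
rewrite pmulr_rge0 // invr_gt0 lt_def snz s0 //.
Qed.

Lemma qf_zero_mat A : (forall v, qf A v = 0) -> forall a b, A a b = 0.
Proof.
move=> H a b.
have Ha : A a a = 0.
  have := H (fun p => 1 * (p == a)%:R + 0 * (p == a)%:R); rewrite qf2.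
  by rewrite conjC1 conjC0 !(mul0r, mulr0, add0r, addr0, mul1r).
have Hb : A b b = 0.
  have := H (fun p => 1 * (p == b)%:R + 0 * (p == b)%:R); rewrite qf2.
  by rewrite conjC1 conjC0 !(mul0r, mulr0, add0r, addr0, mul1r).
have E1 := H (fun p => 1 * (p == a)%:R + 1 * (p == b)%:R).
rewrite qf2 conjC1 !mul1r Ha Hb add0r addr0 in E1.
have E2 := H (fun p => 1 * (p == a)%:R + 'i * (p == b)%:R).
rewrite qf2 conjC1 conjCi !mul1r !mulr1 Ha Hb add0r mulr0 addr0 in E2.
have H2 : (2 * 'i) * A a b = 0.
  have -> : (2 * 'i) * A a b = 'i * (A a b + A b a) + ('i * A a b + - 'i * A b a) by ring.
  by rewrite E1 E2 mulr0 addr0.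
move/eqP: H2; rewrite mulf_eq0 mulf_eq0 pnatr_eq0 /= (negbTE (neq0Ci C)) /=.
by move/eqP.
Qed.

End T.


Section Pull.
Variables (S T K : finType).

Lemma psd_pull (M : S -> S -> C) (g : T -> S) : psd M -> psd (fun a b => M (g a) (g b)).
Proof.
move=> pM v.
have := pM (fun y => \sum_(a | g a == y) v a).
congr (_ <= _).
rewrite /qf -(sum_fiber g (fun a y => \sum_b (v a)^* * M y (g b) * v b)).
apply: eq_bigr => y _.
under [RHS]eq_bigr => a _ do rewrite -(sum_fiber g (fun b y' => (v a)^* * M y y' * v b)).
rewrite exchange_big /=; apply: eq_bigr => y' _.
rewrite rmorph_sum -mulrA big_distrl /=; apply: eq_bigr => a _.
by rewrite mulr_sumr mulr_sumr; apply: eq_bigr => b _; rewrite mulrA.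
Qed.

Lemma psd_mask (A : T -> T -> C) (k : T -> K) : psd A ->
  psd (fun a b => (k a == k b)%:R * A a b).
Proof.
move=> pA v.
have -> : qf (fun a b => (k a == k b)%:R * A a b) v =
   \sum_c qf A (fun a => (k a == c)%:R * v a).
  rewrite /qf [RHS]exchange_big /=; apply: eq_bigr => a _.
  rewrite [RHS]exchange_big /=; apply: eq_bigr => b _.
  rewrite (_ : (v a)^* * ((k a == k b)%:R * A a b) * v b = (k a == k b)%:R * ((v a)^* * A a b * v b)); last by ring.
  rewrite -(sum_delta (fun c => (k a == c)%:R * ((v a)^* * A a b * v b)) (k b)).
  apply: eq_bigr => c _; rewrite rmorphM /= conjC_nat [(k b == c)]eq_sym; ring.
by apply: sumr_ge0 => c _; exact: pA.
Qed.
End Pull.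

End LA.

Section Comb.
Variables (V X : {fset nat}).
Definition kap (a : basis X) : basis X := [ffun x : X => if val x \in V then false else a x].

Lemma restr_merge (sVX : (V `<=` X)%fset) (u : basis V) (c : basis X) : restr V (merge u c) = u.
Proof.
apply/ffunP => w; rewrite !ffunE.
case: insubP => [x xX xw | ]; last by move=> /negP[]; apply: (fsubsetP sVX); exact: valP.
rewrite ffunE; case: insubP => [w' _ ww' | ]; last by rewrite xw => /negP[]; exact: valP.
by congr (u _); apply: val_inj; rewrite ww' xw.
Qed.

Lemma kap_merge (u : basis V) (c : basis X) : kap (merge u c) = kap c.
Proof.
apply/ffunP => x; rewrite !ffunE; case: ifP => // xV.
case: insubP => // w; by rewrite xV.
Qed.

Lemma kap_kap (a : basis X) : kap (kap a) = kap a.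
Proof. by apply/ffunP => x; rewrite !ffunE; case: (val x \in V). Qed.

Lemma merge_restr (a c : basis X) : kap a = kap c -> merge (restr V a) c = a.
Proof.
move=> e; apply/ffunP => x; rewrite !ffunE.
case: insubP => [w wV wx | xV].
  rewrite ffunE; case: insubP => [x' _ x'w | ]; last by rewrite wx => /negP[]; exact: valP.
  by congr (a _); apply: val_inj; rewrite x'w wx.
have := congr1 (fun f : basis X => f x) e; rewrite !ffunE (negbTE xV) => ->.
done.
Qed.

Lemma merge_merge (u v : basis V) (a : basis X) : merge v (merge u a) = merge v a.
Proof.
by apply/ffunP => x; rewrite !ffunE; case: insubP => // xV.
Qed.


Lemma cond_kap (a b : basis X) :
  [forall x : X, (val x \notin V) ==> (a x == b x)] = (kap a == kap b).
Proof.
apply/forallP/eqP => [H | e x].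
  apply/ffunP => x; rewrite !ffunE; case: ifP => // xV.
  by have /implyP/(_ (negbT xV))/eqP := H x.
apply/implyP => xV; have := congr1 (fun f : basis X => f x) e.
by rewrite !ffunE (negbTE xV) => ->.
Qed.

Lemma kap_restr_eq (a b : basis X) :
  (kap a == kap b) && (restr V a == restr V b) = (a == b).
Proof.
apply/andP/eqP => [[/eqP ek /eqP er] | ->]; last by [].
by rewrite -(merge_restr ek) er merge_restr.
Qed.

Lemma sum_split (sVX : (V `<=` X)%fset) (M : nmodType) (f : basis X -> M) :
  \sum_a f a = \sum_(c | kap c == c) \sum_(u : basis V) f (merge u c).
Proof.
rewrite (partition_big kap (fun c => kap c == c)) /=; last by move=> a _; rewrite kap_kap.
apply: eq_bigr => c /eqP cc.
rewrite (reindex_onto (fun u => merge u c) (restr V)) /=; last first.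
  by move=> a /eqP ac; apply: merge_restr; rewrite ac cc.
by apply: eq_bigl => u; rewrite kap_merge cc eqxx (restr_merge sVX) eqxx.
Qed.
End Comb.

Lemma restr_self (X : {fset nat}) (a : basis X) : restr X a = a.
Proof.
apply/ffunP => x; rewrite ffunE; case: insubP => [y _ yx | ]; last by move=> /negP[]; exact: valP.
by congr (a _); apply: val_inj.
Qed.

Lemma merge_self (X : {fset nat}) (u a : basis X) : merge u a = u.
Proof.
apply/ffunP => x; rewrite ffunE; case: insubP => [y _ yx | ]; last by move=> /negP[]; exact: valP.
by congr (u _); apply: val_inj.
Qed.

Lemma restr_restr (V X Y : {fset nat}) (sVX : (V `<=` X)%fset) (a : basis Y) :
  restr V (restr X a) = restr V a.
Proof.
apply/ffunP => w; rewrite !ffunE.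
case: insubP => [x xX xw | ]; last by move=> /negP[]; apply: (fsubsetP sVX); exact: valP.
rewrite ffunE; case: insubP => [y yY yx | nY]; case: insubP => [y' _ y'w | nY'] //.
- by congr (a _); apply: val_inj; rewrite yx y'w xw.
- by case/negP: nY'; rewrite -xw -yx; exact: valP.
- by case/negP: nY; rewrite xw -y'w; exact: valP.
Qed.

Lemma merge_merge3 (V X Y : {fset nat}) (sVX : (V `<=` X)%fset) (u : basis V) (a : basis Y) :
  merge (merge u (restr X a)) a = merge u a.
Proof.
apply/ffunP => y; rewrite !ffunE.
case: (insubP _ (val y)) => [x xX xy | nX]; case: (insubP _ (val y)) => [w wV wy | nV] //.
all: rewrite ?ffunE.
- case: insubP => [w' _ w'x | n]; first by congr (u _); apply: val_inj; rewrite w'x xy wy.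
  by case/negP: n; rewrite xy.
- case: insubP => [w' w'V w'x | _]; first by case/negP: nV; rewrite -xy.
  case: insubP => [y' _ y'x | n]; first by congr (a _); apply: val_inj; rewrite y'x xy.
  by case/negP: n; rewrite xy; exact: valP.
- by case/negP: nX; apply: (fsubsetP sVX).
Qed.

Section Main.
Variable R : realType.
Local Notation C := (R[i]).

Definition unitm (X : {fset nat}) (i j : basis X) : Op R X :=
  fun p q => (p == i)%:R * (q == j)%:R.

Definition Gd (X : {fset nat}) (G : SO R X) (N : Op R X) : Op R X :=
  fun b a => op_tr (op_mul N (G (@unitm X a b))).

Section Lin.
Variables (X : {fset nat}) (G : SO R X).
Hypothesis HG : so_linear G.

Lemma so0 : G (fun _ _ => 0) = (fun _ _ => 0).
Proof.
have := HG (-1) (fun _ _ => 0) (fun _ _ => 0).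
have -> : (fun a b : basis X => -1 * (fun _ _ => 0 : C) a b + (fun _ _ => 0 : C) a b) = (fun _ _ => 0).
  by apply: functional_extensionality => a; apply: functional_extensionality => b; rewrite mulr0 addr0.
move=> ->; apply: functional_extensionality => a; apply: functional_extensionality => b.
by rewrite mulN1r addNr.
Qed.

Lemma soZ k A : G (fun a b => k * A a b) = (fun a b => k * G A a b).
Proof.
have := HG k A (fun _ _ => 0).
have -> : (fun a b : basis X => k * A a b + (fun _ _ => 0 : C) a b) = (fun a b => k * A a b).
  by apply: functional_extensionality => a; apply: functional_extensionality => b; rewrite addr0.
move=> ->; rewrite so0.
by apply: functional_extensionality => a; apply: functional_extensionality => b; rewrite addr0.
Qed.

Lemma so_sum (I : Type) (r : seq I) (c : I -> C) (A : I -> Op R X) :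
  G (fun p q => \sum_(i <- r) c i * A i p q) = (fun p q => \sum_(i <- r) c i * G (A i) p q).
Proof.
elim: r => [|x r IH].
  have -> : (fun p q : basis X => \sum_(i <- [::]) c i * A i p q) = (fun _ _ => 0).
    by apply: functional_extensionality => a; apply: functional_extensionality => b; rewrite big_nil.
  rewrite so0; apply: functional_extensionality => a; apply: functional_extensionality => b.
  by rewrite big_nil.
have -> : (fun p q : basis X => \sum_(i <- x :: r) c i * A i p q) =
   (fun p q => c x * A x p q + (fun p' q' => \sum_(i <- r) c i * A i p' q') p q).
  by apply: functional_extensionality => a; apply: functional_extensionality => b; rewrite big_cons.
rewrite HG IH; apply: functional_extensionality => a; apply: functional_extensionality => b.
by rewrite big_cons.
Qed.

Lemma linsum B p q : G B p q = \sum_i \sum_j B i j * G (@unitm X i j) p q.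
Proof.
have eB : B = (fun p q => \sum_(ij : (basis X * basis X)%type)
                          B ij.1 ij.2 * @unitm X ij.1 ij.2 p q).
  apply: functional_extensionality => a; apply: functional_extensionality => b.
  rewrite -(pair_big xpredT xpredT (fun i j => B i j * @unitm X i j a b)) /=.
  symmetry; rewrite (eq_bigr (fun i => B i b * (i == a)%:R)); first by rewrite sum_delta.
  move=> i _; rewrite (eq_bigr (fun j => (B i j * (i == a)%:R) * (j == b)%:R)) ?sum_delta // => j _.
  by rewrite /unitm (eq_sym a) (eq_sym b) mulrA.
rewrite {1}eB so_sum.
by rewrite -(pair_big xpredT xpredT (fun i j => B i j * G (@unitm X i j) p q)).
Qed.

Lemma trlin N B : op_tr (op_mul N (G B)) =
  \sum_i \sum_j B i j * op_tr (op_mul N (G (@unitm X i j))).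
Proof.
rewrite /op_tr /op_mul.
under eq_bigr => a _ do under eq_bigr => c _ do rewrite linsum mulr_sumr.
under eq_bigr => a _ do rewrite exchange_big /=.
rewrite exchange_big /=; apply: eq_bigr => i _.
under eq_bigr => a _ do under eq_bigr => j _ do rewrite mulr_sumr.
under eq_bigr => a _ do rewrite exchange_big /=.
rewrite exchange_big /=; apply: eq_bigr => j _.
rewrite mulr_sumr; apply: eq_bigr => a _.
rewrite mulr_sumr; apply: eq_bigr => c _; ring.
Qed.

End Lin.
Ltac fext := apply: functional_extensionality => ?; apply: functional_extensionality => ?.

Lemma ext_lin (V : {fset nat}) (E : SO R V) (X : {fset nat}) :
  so_linear E -> so_linear (@ext_so R V X E).
Proof.
move=> HE k A B; apply: functional_extensionality => a; apply: functional_extensionality => b.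
rewrite /ext_so /=.
by have /= -> := HE k (fun u v => A (merge u a) (merge v b)) (fun u v => B (merge u a) (merge v b)).
Qed.

Lemma ext_self (V : {fset nat}) (E : SO R V) (rho : Op R V) : ext_so V E rho = E rho.
Proof.
apply: functional_extensionality => a; apply: functional_extensionality => b.
rewrite /ext_so !restr_self.
by rewrite (_ : (fun u v => rho (merge u a) (merge v b)) = rho) //; fext; rewrite !merge_self.
Qed.

Lemma ext_comp (V X Y : {fset nat}) (E : SO R V) (rho : Op R Y) : (V `<=` X)%fset ->
  ext_so Y (ext_so X E) rho = ext_so Y E rho.
Proof.
move=> sVX; apply: functional_extensionality => a; apply: functional_extensionality => b.
rewrite /ext_so !(restr_restr sVX).
by congr (E _ _ _); fext; rewrite !merge_merge3.
Qed.

Lemma ext_merge (V X : {fset nat}) (E : SO R V) (rho : Op R X) (sVX : (V `<=` X)%fset) u u' c c' :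
  ext_so X E rho (merge u c) (merge u' c') = E (fun u1 v1 => rho (merge u1 c) (merge v1 c')) u u'.
Proof.
rewrite /ext_so !(restr_merge sVX).
by congr (E _ _ _); fext; rewrite !merge_merge.
Qed.

Lemma ext_op_kap (W Y : {fset nat}) (M : Op R W) a b :
  ext_op Y M a b = (kap W a == kap W b)%:R * M (restr W a) (restr W b).
Proof. by rewrite /ext_op cond_kap; case: eqP => _; rewrite ?mul1r ?mul0r. Qed.

Lemma ext_op_psd (W Y : {fset nat}) (M : Op R W) : positive M -> positive (ext_op Y M).
Proof.
move=> pM; apply: (psd_ext (A := fun a b => (kap W a == kap W b)%:R * M (restr W a) (restr W b))).
  by move=> a b; rewrite ext_op_kap.
exact: (psd_mask (@kap W Y) (@psd_pull _ _ _ M (@restr Y W) pM)).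
Qed.

Lemma ext_op_sub (W Y : {fset nat}) (A B : Op R W) a b :
  ext_op Y (op_sub A B) a b = ext_op Y A a b - ext_op Y B a b.
Proof. by rewrite /ext_op /op_sub; case: ifP; rewrite ?subr0. Qed.

Lemma ext_op_id (W Y : {fset nat}) a b : ext_op Y (@op_id R W) a b = @op_id R Y a b.
Proof.
rewrite ext_op_kap /op_id -(kap_restr_eq W a b).
by case: (kap W a == kap W b); case: (restr W a == restr W b); rewrite ?mul1r ?mul0r.
Qed.

Lemma ext_op_self (X : {fset nat}) (M : Op R X) a b : ext_op X M a b = M a b.
Proof.
rewrite /ext_op (_ : [forall x : X, _] = true) ?restr_self //.
by apply/forallP => x; apply/implyP => /negP[]; exact: valP.
Qed.

Lemma split2 (W Y : {fset nat}) (sWY : (W `<=` Y)%fset) (M : Op R W) (D : Op R Y) :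
  op_tr (op_mul (ext_op Y M) D) =
  \sum_(c | kap W c == c) \sum_u \sum_u' M u u' * D (merge u' c) (merge u c).
Proof.
rewrite /op_tr /op_mul (sum_split sWY); apply: eq_bigr => c /eqP cc.
apply: eq_bigr => u _; rewrite (sum_split sWY).
rewrite (bigD1 c) /=; last by rewrite cc.
rewrite [X in _ + X]big1 ?addr0; last first.
  move=> c' /andP [/eqP cc' nc]; apply: big1 => u' _.
  by rewrite ext_op_kap !kap_merge cc cc' eq_sym (negbTE nc) !mul0r.
apply: eq_bigr => u' _.
by rewrite ext_op_kap !kap_merge eqxx mul1r !(restr_merge sWY).
Qed.

Lemma ext_tn (V X : {fset nat}) (E : SO R V) (rho : Op R X) : (V `<=` X)%fset ->
  trace_nonincreasing E -> positive rho -> op_tr (ext_so X E rho) <= op_tr rho.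
Proof.
move=> sVX tnE prho.
rewrite /op_tr (sum_split sVX) [X in _ <= X](sum_split sVX).
apply: ler_sum => c _.
under eq_bigr => u _ do rewrite (ext_merge _ _ sVX).
exact: (tnE _ (psd_pull (fun u => merge u c) prho)).
Qed.

Lemma core (V Y : {fset nat}) (G : SO R V) (HG : so_linear G) (sVY : (V `<=` Y)%fset)
  (N : Op R V) (rho : Op R Y) :
  op_tr (op_mul (ext_op Y (Gd G N)) rho) = op_tr (op_mul (ext_op Y N) (ext_so Y G rho)).
Proof.
rewrite !(split2 sVY); apply: eq_bigr => c _.
under [RHS]eq_bigr => u _ do under eq_bigr => u' _ do rewrite (ext_merge _ _ sVY).
transitivity (op_tr (op_mul N (G (fun u1 v1 => rho (merge u1 c) (merge v1 c))))); last by [].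
rewrite (trlin HG) /Gd exchange_big /=; apply: eq_bigr => i _; apply: eq_bigr => j _.
by rewrite mulrC.
Qed.

Lemma qfGd (X : {fset nat}) (G : SO R X) (HG : so_linear G) (P : Op R X) (w : basis X -> C) :
  qf (Gd G P) w = op_tr (op_mul P (G (fun a b => w a * (w b)^*))).
Proof.
rewrite (trlin HG) /qf exchange_big /=; apply: eq_bigr => b _; apply: eq_bigr => a _.
by rewrite /Gd; ring.
Qed.

Lemma Gd_effect (V X : {fset nat}) (E : SO R V) (HE : DProg E) (sVX : (V `<=` X)%fset)
  (P : Op R X) : positive P -> positive (op_sub (@op_id R X) P) ->
  positive (Gd (ext_so X E) P) /\ positive (op_sub (@op_id R X) (Gd (ext_so X E) P)).
Proof.
case: HE => linE cpE tnE pP pIP.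
have HG := ext_lin (X := X) linE.
have cpG : forall rho : Op R X, positive rho -> positive (ext_so X E rho) := cpE X sVX.
split=> w.
  change (0 <= qf (Gd (ext_so X E) P) w).
  rewrite (qfGd HG); apply: tr_mul_ge0 => //; apply: cpG; exact: rank1_psd.
change (0 <= qf (fun a b => @op_id R X a b - Gd (ext_so X E) P a b) w).
rewrite (qfB (fun a b => @op_id R X a b)) qf_id (qfGd HG).
set sig := ext_so X E _.
have ps : positive sig by apply: cpG; exact: rank1_psd.
have h1 : op_tr (op_mul P sig) <= op_tr sig.
  rewrite -subr_ge0.
  have := tr_mul_ge0 pIP ps.
  by rewrite (muloBl (fun a b => @op_id R X a b)) mulo1.
have h2 : op_tr sig <= \sum_a (w a)^* * w a.
  have := ext_tn sVX tnE (rank1_psd w).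
  by congr (_ <= _); apply: eq_bigr => a _; rewrite mulrC.
by rewrite subr_ge0; exact: le_trans h1 h2.
Qed.

Lemma op_trE (X : {fset nat}) (A : Op R X) : op_tr A = trc A. Proof. by []. Qed.
Lemma op_mulE (X : {fset nat}) (A B : Op R X) : op_mul A B = mulo A B. Proof. by []. Qed.

Lemma scale_pdensity (X : {fset nat}) (rho : Op R X) : positive rho ->
  let t := (1 + op_tr rho)^-1 in 0 < t /\ pdensity (fun a b => t * rho a b).
Proof.
move=> prho t.
have tr0 : 0 <= op_tr rho := trc_ge0 prho.
have p1 : 0 < 1 + op_tr rho by rewrite (lt_le_trans ltr01) // lerDl.
have t0 : 0 < t by rewrite invr_gt0.
split=> //; split; first exact: psdZ (ltW t0) prho.
change (trc (fun a b => t * rho a b) <= 1); rewrite trcZ -subr_ge0.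
have -> : 1 - t * op_tr rho = t.
  rewrite /t; field; by rewrite lt0r_neq0.
exact: ltW.
Qed.

Lemma tot_psd (V W : {fset nat}) (F : SO R V) (linF : so_linear F) (M N : Op R W) :
  models_tot F M N -> forall Y, (V `|` W `<=` Y)%fset -> forall rho : Op R Y, positive rho ->
  op_tr (op_mul (ext_op Y M) rho) <= op_tr (op_mul (ext_op Y N) (ext_so Y F rho)).
Proof.
move=> H Y sY rho prho.
have [t0 pd] := scale_pdensity prho.
have := H Y sY _ pd.
rewrite (soZ (ext_lin (X := Y) linF)).
by rewrite !op_mulE !op_trE !muloZr ler_pM2l.
Qed.

Lemma par_psd (V W : {fset nat}) (F : SO R V) (linF : so_linear F) (M N : Op R W) :
  models_par F M N -> forall Y, (V `|` W `<=` Y)%fset -> forall rho : Op R Y, positive rho ->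
  op_tr (op_mul (ext_op Y M) rho) <=
  op_tr (op_mul (ext_op Y N) (ext_so Y F rho)) + op_tr rho - op_tr (ext_so Y F rho).
Proof.
move=> H Y sY rho prho.
have [t0 pd] := scale_pdensity prho.
have := H Y sY _ pd.
rewrite (soZ (ext_lin (X := Y) linF)).
rewrite !op_mulE !op_trE !muloZr !trcZ -mulrDr -mulrBr.
by rewrite ler_pM2l.
Qed.

Lemma ext_op_self_tr (X : {fset nat}) (P D : Op R X) :
  op_tr (op_mul (ext_op X P) D) = op_tr (op_mul P D).
Proof. by apply: eq_bigr => a _; apply: eq_bigr => c _; rewrite ext_op_self. Qed.

Lemma ext_op_IB (W Y : {fset nat}) (K : Op R W) (D : Op R Y) :
  op_tr (op_mul (ext_op Y (op_sub (@op_id R W) K)) D) = op_tr D - op_tr (op_mul (ext_op Y K) D).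
Proof.
rewrite [op_tr D]op_trE -(mulo1 D) -(muloBl (fun a b => @op_id R Y a b)).
by apply: eq_bigr => a _; apply: eq_bigr => c _; rewrite ext_op_sub ext_op_id.
Qed.

Lemma D1 (V : {fset nat}) (E F : SO R V) : so_le E F -> refine_tot E F.
Proof.
move=> le W M N [pM _] [pN _] H Y sY rho pd.
have sVY : (V `<=` Y)%fset by apply: fsubset_trans sY; exact: fsubsetUl.
apply: le_trans (H Y sY rho pd) _.
rewrite -subr_ge0 !op_mulE !op_trE -muloBr.
apply: tr_mul_ge0; first exact: ext_op_psd.
exact: (le Y sVY rho pd.1).
Qed.

Lemma D2 (V : {fset nat}) (E F : SO R V) : so_le F E -> refine_par E F.
Proof.
move=> le W M N [pM _] [pN pIN] H Y sY rho pd.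
have sVY : (V `<=` Y)%fset by apply: fsubset_trans sY; exact: fsubsetUl.
have := H Y sY rho pd.
set sE := ext_so Y E rho; set sF := ext_so Y F rho.
have pIN' : psd (fun a b => @op_id R Y a b - ext_op Y N a b).
  apply: psd_ext (ext_op_psd (Y := Y) pIN) => a b; by rewrite ext_op_sub ext_op_id.
have k := tr_mul_ge0 pIN' (le Y sVY rho pd.1).
rewrite (muloBl (fun a b => @op_id R Y a b)) mulo1 muloBr trcB in k.
move=> h; rewrite -subr_ge0.
set x := op_tr _ in h *.
set a := op_tr (op_mul (ext_op Y N) sE) in h *.
set c := op_tr (op_mul (ext_op Y N) sF).
have -> : c + op_tr rho - op_tr sF - x =
  (a + op_tr rho - op_tr sE - x) + ((op_tr sE - op_tr sF) - (a - c)) by ring.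
apply: addr_ge0; first by rewrite subr_ge0.
exact: k.
Qed.

Lemma D3 (V : {fset nat}) (E F : SO R V) : DProg E -> DProg F -> refine_tot E F -> so_le E F.
Proof.
move=> dE dF H X sVX rho prho.
have linE : so_linear E by case: dE.
have linF : so_linear F by case: dF.
apply: psd_of_tests => P pP pIP.
rewrite muloBr subr_ge0.
have [pM pIM] := Gd_effect dE sVX pP pIP.
have hE : models_tot E (Gd (ext_so X E) P) P.
  move=> Y sY rho' _.
  have sXY : (X `<=` Y)%fset by apply: fsubset_trans sY; exact: fsubsetUr.
  by rewrite (core (ext_lin (X := X) linE) sXY) (ext_comp _ _ sVX).
have sX : (V `|` X `<=` X)%fset by rewrite fsubUset sVX fsubset_refl.
have := tot_psd linF (H X _ P (conj pM pIM) (conj pP pIP) hE) sX prho.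
rewrite (core (ext_lin (X := X) linE) (fsubset_refl X)) (ext_comp _ _ sVX).
by rewrite !ext_op_self_tr.
Qed.

Lemma D4 (V : {fset nat}) (E F : SO R V) : DProg E -> DProg F -> refine_par E F -> so_le F E.
Proof.
move=> dE dF H X sVX rho prho.
have linE : so_linear E by case: dE.
have linF : so_linear F by case: dF.
apply: psd_of_tests => P pP pIP.
rewrite muloBr subr_ge0.
have [pM pIM] := Gd_effect dE sVX pP pIP.
set G := Gd (ext_so X E) P.
have eQ : effect (op_sub (@op_id R X) P).
  split=> //; apply: psd_ext pP => a b; rewrite /op_sub; ring.
have eM : effect (op_sub (@op_id R X) G).
  split=> //; apply: psd_ext pM => a b; rewrite /op_sub /G; ring.
have hE : models_par E (op_sub (@op_id R X) G) (op_sub (@op_id R X) P).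
  move=> Y sY rho' _.
  have sXY : (X `<=` Y)%fset by apply: fsubset_trans sY; exact: fsubsetUr.
  rewrite !ext_op_IB (core (ext_lin (X := X) linE) sXY) (ext_comp _ _ sVX).
  by rewrite le_eqVlt; apply/orP; left; apply/eqP; ring.
have sX : (V `|` X `<=` X)%fset by rewrite fsubUset sVX fsubset_refl.
have := par_psd linF (H X _ _ eM eQ hE) sX prho.
rewrite !ext_op_IB (core (ext_lin (X := X) linE) (fsubset_refl X)) (ext_comp _ _ sVX).
rewrite !ext_op_self_tr -!op_trE -!op_mulE => h.
rewrite -subr_ge0.
set a := op_tr (op_mul P (ext_so X E rho)) in h *.
set c := op_tr (op_mul P (ext_so X F rho)) in h *.
set d := op_tr (ext_so X F rho) in h.
have -> : a - c = (d - c + op_tr rho - d) - (op_tr rho - a) by ring.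
by rewrite subr_ge0.
Qed.

Lemma agree_eq (V : {fset nat}) (E F : SO R V) : so_linear E -> so_linear F ->
  (forall rho, positive rho -> forall a b, E rho a b = F rho a b) -> E = F.
Proof.
move=> lE lF H; apply: functional_extensionality => rho.
apply: functional_extensionality => a; apply: functional_extensionality => b.
rewrite (linsum lE) (linsum lF); apply: eq_bigr => i _; apply: eq_bigr => j _; congr (_ * _).
apply/eqP; rewrite -subr_eq0; apply/eqP.
apply: (qf_zero_mat (A := fun i j => E (unitm i j) a b - F (unitm i j) a b)) => y.
pose B : Op R V := fun p q => (y p)^* * y q.
have pB : positive B.
  by apply: psd_ext (rank1_psd (fun p => (y p)^*)) => p q; rewrite conjCK.
have := H B pB a b; rewrite (linsum lE) (linsum lF) => /eqP; rewrite -subr_eq0 -sumrB => /eqP <-.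
apply: eq_bigr => i' _; rewrite -sumrB; apply: eq_bigr => j' _; rewrite /B; ring.
Qed.

Lemma zero_of_le (V : {fset nat}) (A B : Op R V) : positive (op_sub A B) ->
  op_tr (op_sub A B) = 0 -> forall a b, A a b = B a b.
Proof.
move=> p t0 a b; apply/eqP; rewrite -subr_eq0; apply/eqP; exact: psd_tr0 p t0 a b.
Qed.

Lemma so_le_antisym (V : {fset nat}) (E F : SO R V) : DProg E -> DProg F ->
  so_le E F -> so_le F E -> E = F.
Proof.
move=> dE dF l1 l2.
have linE : so_linear E by case: dE.
have linF : so_linear F by case: dF.
apply: agree_eq => // rho prho a b.
have p1 := l1 V (fsubset_refl V) rho prho.
have p2 := l2 V (fsubset_refl V) rho prho.
rewrite !ext_self in p1 p2.
have t0 : op_tr (op_sub (F rho) (E rho)) = 0.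
  apply/eqP; rewrite eq_le (trc_ge0 p1) andbT.
  have := trc_ge0 p2.
  by rewrite !op_trE !trcB -oppr_ge0 opprB.
by rewrite (zero_of_le p1 t0).
Qed.

Lemma tp_le (V : {fset nat}) (E F : SO R V) : DProg E -> DProg F ->
  trace_preserving E -> trace_preserving F -> so_le E F -> E = F.
Proof.
move=> dE dF tE tF l1.
have linE : so_linear E by case: dE.
have linF : so_linear F by case: dF.
apply: agree_eq => // rho prho a b.
have p1 := l1 V (fsubset_refl V) rho prho.
rewrite !ext_self in p1.
have t0 : op_tr (op_sub (F rho) (E rho)) = 0.
  by rewrite op_trE trcB -!op_trE tE tF subrr.
by rewrite (zero_of_le p1 t0).
Qed.

Lemma so_le_refl (V : {fset nat}) (E : SO R V) : so_le E E.
Proof.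
move=> X _ rho _; apply: (psd_ext (A := fun _ _ => 0)); last exact: psd0.
by move=> a b; rewrite /op_sub subrr.
Qed.

End Main.

Theorem theorem4p2 (R : realType) (V : {fset nat}) (E F : SO R V) :
  DProg E -> DProg F ->
  [/\ (refine_tot E F <-> so_le E F),
      (refine_par E F <-> so_le F E),
      (equiv_tot E F <-> equiv_par E F) /\ (equiv_par E F <-> E = F)
    & (trace_preserving E -> trace_preserving F ->
       (refine_tot E F <-> refine_par E F) /\ (refine_par E F <-> E = F))].
Proof.
move=> dE dF.
have h1 : refine_tot E F <-> so_le E F := conj (D3 dE dF) (@D1 _ _ _ _).
have h1' : refine_tot F E <-> so_le F E := conj (D3 dF dE) (@D1 _ _ _ _).
have h2 : refine_par E F <-> so_le F E := conj (D4 dE dF) (@D2 _ _ _ _).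
have h2' : refine_par F E <-> so_le E F := conj (D4 dF dE) (@D2 _ _ _ _).
have hq : equiv_par E F <-> E = F.
  split; first by case=> a b; exact: so_le_antisym dE dF (proj1 h2' b) (proj1 h2 a).
  by move=> <-; split; apply: (@D2 _ _ _ _); exact: so_le_refl.
split.
- exact: h1.
- exact: h2.
- split; last exact: hq.
  rewrite /equiv_tot /equiv_par; split.
    case=> a b; split; [exact: (proj2 h2 (proj1 h1' b)) | exact: (proj2 h2' (proj1 h1 a))].
  case=> a b; split; [exact: (proj2 h1 (proj1 h2' b)) | exact: (proj2 h1' (proj1 h2 a))].
- move=> tE tF.
  have hp : refine_par E F <-> E = F.
    split; last by move=> <-; apply: (@D2 _ _ _ _); exact: so_le_refl.
    by move=> l; symmetry; exact: tp_le dF dE tF tE (proj1 h2 l).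
  split=> //; split.
    by move=> l; apply: (proj2 hp); exact: tp_le dE dF tE tF (proj1 h1 l).
  by move=> /(proj1 hp) <-; apply: (@D1 _ _ _ _); exact: so_le_refl.
Qed.
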